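(* Consider an RB instance satisfying Assumption 2 in which $P(s,a,s')>0$ for all $s,s'\in\mathbb S$, $a\in\{0,1\}$. Then there exist constants $\eta'>0$ and $K_{\mathrm{noise}}>0$ such that for all sufficiently large $N$, every time $t$, every system state with $\|X_t([N])-\mu^*\|_1\le\eta'$ (for which Optimal Local Control applied to all $N$ arms is defined), and every $\xi\in\mathbb R^{\mathbb S}$ with $\|\xi\|_2=1$ and $\mu^*\xi^\top=0$: if $\mathbf A_t$ is chosen by Optimal Local Control applied to all $N$ arms, then $$\mathbb E\Big[\big|\big(X_{t+1}([N])-\mu^*-(X_t([N])-\mu^* )\Phi\big)\xi^\top\big|\,\Big|\,X_t,\mathbf A_t\Big]\ge\frac{K_{\mathrm{noise}}}{\sqrt N}.$$
   Context: Single-armed MDP $(\mathbb S,\{0,1\},P,r)$, finite $\mathbb S$, budget $\alpha\in(0,1)$; $N$ arms transition independently by $P$ given states and actions. $X_t([N],s)=\frac1N\#\{i:S_t(i)=s\}$ (row vector $X_t([N])$). LP relaxation: maximize $\sum r(s,a)y(s,a)$ over $y\ge0$ s.t. $\sum_sy(s,1)=\alpha$, $\sum_{s',a}y(s',a)P(s',a,s)=\sum_ay(s,a)$ for all $s$, $\sum y=1$; $y^*$ a fixed optimal solution. $\bar\pi^*(a|s)=y^*(s,a)/(y^*(s,0)+y^*(s,1))$ if denominator $>0$, else $1/2$; $P_{\bar\pi^*}(s,s')=\sum_a\bar\pi^*(a|s)P(s,a,s')$; $\mu^*(s)=y^*(s,0)+y^*(s,1)$. Assumption 2: unique $\tilde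 s$ with $y^*(\tilde s,0),y^*(\tilde s,1)>0$. $\Phi=P_{\bar\pi^*}-\mathbf 1^\top\mu^*-(c-\alpha\mathbf 1)^\top(P_1(\tilde s)-P_0(\tilde s))$, $c=(\bar\pi^*(1|s))_s$, $P_a(\tilde s)=(P(\tilde s,a,s))_s$, $\mathbf 1$ all-ones row vector. $S^+,S^-,S^\emptyset$: states with ($y^*(s,1)>0=y^*(s,0)$), ($y^*(s,1)=0<y^*(s,0)$), ($y^*(s,1)=y^*(s,0)=0$). Randomized rounding of $c\ge0$: $\lceil c\rceil$ w.p. $c-\lfloor c\rfloor$, else $\lfloor c\rfloor$. Optimal Local Control applied to all $N$ arms with $z(s)$ arms in state $s$, defined when $\sum_{s\neq\tilde s}\bar\pi^*(1|s)z(s)\le\alpha N-|S^\emptyset|-1$ and $\sum_{s\neq\tilde s}\bar\pi^*(0|s)z(s)\le(1-\alpha)N-|S^\emptyset|-1$: let $B$ be a randomized rounding of $\alpha N$; activate all arms in $S^+$, none in $S^-$, a randomized rounding of $z(s)/2$ arms in each $s\in S^\emptyset$, and arms in $\tilde s$ so that exactly $B$ are active. *)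

(* Defs.v *)
From HB Require Import structures.
From mathcomp Require Import all_boot all_order all_algebra.
From mathcomp Require Export reals.
Set Implicit Arguments. Unset Strict Implicit. Unset Printing Implicit Defensive.
Import Order.TTheory GRing.Theory Num.Theory.
Local Open Scope ring_scope.

Section RB.
Variables (R : realType) (S : finType).
(* actions: false = 0 (passive), true = 1 (active) *)
Implicit Types (P : S -> bool -> S -> R) (y : S -> bool -> R).

Definition is_stochastic P :=
  forall s a, (forall s', 0 <= P s a s') /\ \sum_(s' : S) P s a s' = 1.

Definition lp_objective (r : S -> bool -> R) y :=
  \sum_(s : S) \sum_(a : bool) r s a * y s a.

Definition lp_feasible P (alpha : R) y :=
  [/\ (forall s a, 0 <= y s a),
      \sum_(s : S) y s true = alpha,
      (forall s, \sum_(s' : S) \sum_(a : bool) y s' a * P s' a s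
                 = \sum_(a : bool) y s a)
    & \sum_(s : S) \sum_(a : bool) y s a = 1].

Definition lp_optimal P (r : S -> bool -> R) alpha y :=
  lp_feasible P alpha y /\
  forall y', lp_feasible P alpha y' -> lp_objective r y' <= lp_objective r y.

Definition mu_star y (s : S) : R := y s false + y s true.

Definition pi_bar y (a : bool) (s : S) : R :=
  if 0 < mu_star y s then y s a / mu_star y s else 1 / 2.

Definition P_pi P y (s s' : S) : R := \sum_(a : bool) pi_bar y a s * P s a s'.

Definition assumption2 y (st : S) :=
  (0 < y st false /\ 0 < y st true) /\
  forall s, 0 < y s false -> 0 < y s true -> s = st.

Definition Phi P y (alpha : R) (st : S) (s s' : S) : R :=
  P_pi P y s s' - mu_star y s'
  - (pi_bar y true s - alpha) * (P st true s' - P st false s').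

Definition S_plus y : pred S := fun s => (0 < y s true) && (y s false == 0).
Definition S_minus y : pred S := fun s => (y s true == 0) && (0 < y s false).
Definition S_empty y : pred S := fun s => (y s true == 0) && (y s false == 0).

Definition cnt N (x : {ffun 'I_N -> S}) (s : S) : nat := #|[set i | x i == s]|.

Definition emp N (x : {ffun 'I_N -> S}) (s : S) : R := (cnt x s)%:R / N%:R.

Definition l1dist (u v : S -> R) : R := \sum_(s : S) `|u s - v s|.

Definition olc_defined y (alpha : R) (st : S) N (x : {ffun 'I_N -> S}) :=
  \sum_(s : S | s != st) pi_bar y true s * (cnt x s)%:R
     <= alpha * N%:R - #|S_empty y|%:R - 1 /\
  \sum_(s : S | s != st) pi_bar y false s * (cnt x s)%:R
     <= (1 - alpha) * N%:R - #|S_empty y|%:R - 1.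

(* k is in the support of a randomized rounding of c >= 0
   (k = floor c or ceil c, each reached with positive probability) *)
Definition rround_support (c : R) (k : nat) : Prop := `|k%:R - c| < 1.

(* a is an action vector that Optimal Local Control (applied to all N arms in
   system state x) selects with positive probability. *)
Definition olc_action y (alpha : R) N (x : {ffun 'I_N -> S})
    (a : {ffun 'I_N -> bool}) :=
  [/\ rround_support (alpha * N%:R) #|[set i | a i]|,
      (forall i, S_plus y (x i) -> a i = true),
      (forall i, S_minus y (x i) -> a i = false)
    & (forall s, S_empty y s ->
         rround_support ((cnt x s)%:R / 2) #|[set i | (x i == s) && a i]|)].

Definition next_prob P N (x : {ffun 'I_N -> S}) (a : {ffun 'I_N -> bool})
    (nxt : {ffun 'I_N -> S}) : R :=
  \prod_(i : 'I_N) P (x i) (a i) (nxt i).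

Definition noise_term P y alpha st N (x nxt : {ffun 'I_N -> S}) (xi : S -> R) : R :=
  \sum_(s' : S) (emp nxt s' - mu_star y s') * xi s'
  - \sum_(s' : S) (\sum_(s : S) (emp x s - mu_star y s) * Phi P y alpha st s s') * xi s'.

Definition cond_exp_abs_noise P y alpha st N (x : {ffun 'I_N -> S})
    (a : {ffun 'I_N -> bool}) (xi : S -> R) : R :=
  \sum_(nxt : {ffun 'I_N -> S})
     next_prob P x a nxt * `|noise_term P y alpha st x nxt xi|.

End RB.

(* Main.v *)
Require Import Defs.
From HB Require Import structures.
From mathcomp Require Import all_boot all_order all_algebra.
From mathcomp Require Import reals.
From mathcomp Require Import ring lra.
Import Order.TTheory GRing.Theory Num.Theory.
Local Open Scope ring_scope.

Lemma pow4 (R : realType) (a b : R) : (a + b) ^+ 4 <= 8 * a ^+ 4 + 8 * b ^+ 4.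
Proof.
have h1 : (a + b) ^+ 2 <= 2 * (a ^+ 2 + b ^+ 2) by have := sqr_ge0 (a - b); nra.
have h2 := sqr_ge0 (a ^+ 2 - b ^+ 2).
have h3 : 0 <= (a + b) ^+ 2 := sqr_ge0 _.
have -> : (a + b) ^+ 4 = ((a + b) ^+ 2) ^+ 2 by rewrite -exprM.
nra.
Qed.
Lemma pt (R : realType) (t x : R) : 0 <= t -> t ^+ 2 * x ^+ 2 <= t ^+ 3 * `|x| + x ^+ 4.
Proof.
move=> t0; have hx : x ^+ 2 = `|x| ^+ 2 by rewrite real_normK ?num_real.
have ha := normr_ge0 x.
have -> : x ^+ 4 = (`|x| ^+ 2) ^+ 2 by rewrite -hx -exprM.
rewrite hx.
case: (leP `|x| t) => h.
  have : `|x| * `|x| <= t * `|x| by nra.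
  have : 0 <= `|x| ^+ 4 by rewrite exprn_ge0.
  nra.
have h2 : t ^+ 2 <= `|x| ^+ 2 by nra.
have h3 : t ^+ 2 * `|x| ^+ 2 <= `|x| ^+ 2 * `|x| ^+ 2 by apply: ler_wpM2r => //; apply: sqr_ge0.
have h4 : 0 <= t ^+ 3 * `|x| by rewrite mulr_ge0 ?exprn_ge0.
rewrite -expr2 in h3; lra.
Qed.
Lemma finmin (R : realType) (T : finType) (F : T -> R) : (forall t, 0 < F t) ->
  exists p, [/\ 0 < p, p <= 1 & forall t, p <= F t].
Proof.
move=> hF; set Z := \sum_t (F t)^-1.
have Z0 : 0 <= Z by apply: sumr_ge0 => t _; rewrite invr_ge0 ltW.
exists (1 + Z)^-1; split.
- by rewrite invr_gt0; lra.
- by rewrite invf_le1; lra.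
move=> t.
have ht : (F t)^-1 <= Z.
  by rewrite /Z (bigD1 t) //= lerDl; apply: sumr_ge0 => i _; rewrite invr_ge0 ltW.
rewrite -[F t]invrK lef_pV2 ?posrE ?invr_gt0 //; lra.
Qed.
Lemma varlb (R : realType) (S : finType) (mu g : S -> R) (t : R) :
 (forall s, 0 <= mu s) -> \sum_s mu s = 1 -> \sum_s mu s * g s = 0 -> \sum_s g s ^+ 2 = 1 ->
 1 / (2 * (#|S|%:R + 1)) <= \sum_s (g s - t) ^+ 2.
Proof.
move=> mu0 mu1 mug g1.
set Q := \sum_s (g s - t) ^+ 2.
have hmu1 : forall s, mu s <= 1.
  by move=> s; rewrite -mu1 (bigD1 s) //= lerDl; apply: sumr_ge0.
have ha : t ^+ 2 <= Q.
  apply: (@le_trans _ _ (\sum_s mu s * (g s - t) ^+ 2)).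
    have -> : \sum_s mu s * (g s - t) ^+ 2 =
       \sum_s mu s * g s ^+ 2 - 2 * t * \sum_s mu s * g s + t ^+ 2 * \sum_s mu s.
      rewrite !mulr_sumr -sumrB -big_split /=; apply: eq_bigr => s _; ring.
    rewrite mug mu1 mulr0 subr0 mulr1 lerDr; apply: sumr_ge0 => s _.
    by rewrite mulr_ge0 ?sqr_ge0.
  apply: ler_sum => s _; rewrite -[X in _ <= X]mul1r; apply: ler_wpM2r => //.
  exact: sqr_ge0.
have hb : 1 / 2 - #|S|%:R * t ^+ 2 <= Q.
  apply: (@le_trans _ _ (\sum_s (g s ^+ 2 / 2 - t ^+ 2))).
    rewrite sumrB -mulr_suml g1 sumr_const mulr_natl mul1r; lra.
  apply: ler_sum => s _; have := sqr_ge0 (g s - 2 * t); nra.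
have n0 : 0 <= #|S|%:R :> R by [].
rewrite ler_pdivrMr; last by lra.
have : #|S|%:R * t ^+ 2 <= #|S|%:R * Q by apply: ler_wpM2l.
nra.
Qed.

Section Ex.
Variables (R : realType) (S : finType) (N : nat) (q : 'I_N -> S -> R).
Hypothesis q_ge0 : forall i s, 0 <= q i s.
Hypothesis q_sum1 : forall i, \sum_s q i s = 1.

Definition wt (f : {ffun 'I_N -> S}) := \prod_i q i (f i).
Definition E (F : {ffun 'I_N -> S} -> R) := \sum_f wt f * F f.

Lemma wt_ge0 f : 0 <= wt f.
Proof. by apply: prodr_ge0 => i _; apply: q_ge0. Qed.

Lemma E_prod (H : 'I_N -> S -> R) :
  E (fun f => \prod_i H i (f i)) = \prod_i \sum_s q i s * H i s.
Proof.
rewrite bigA_distr_bigA; apply: eq_bigr => f _.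
by rewrite /wt -big_split.
Qed.

Lemma E1 : E (fun _ => 1) = 1.
Proof.
transitivity (E (fun f => \prod_i (fun _ _ => (1:R)) i (f i))).
  by rewrite /E; apply: eq_bigr => f _; rewrite big1_eq.
rewrite (E_prod (fun _ _ => 1)); apply: big1 => i _.
by under eq_bigr do rewrite mulr1; apply: q_sum1.
Qed.

Lemma E_add F G : E (fun f => F f + G f) = E F + E G.
Proof. by rewrite /E -big_split; apply: eq_bigr => f _; rewrite mulrDr. Qed.

Lemma E_scale c F : E (fun f => c * F f) = c * E F.
Proof. by rewrite /E mulr_sumr; apply: eq_bigr => f _; rewrite mulrCA. Qed.

Lemma E_const c : E (fun _ => c) = c.
Proof.
transitivity (E (fun f => c * (fun _ => 1) f)); first by rewrite /E; apply: eq_bigr => f _; rewrite mulr1.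
by rewrite (E_scale c (fun _ => 1)) E1 mulr1.
Qed.

Lemma E_sum (I : finType) (F : I -> {ffun 'I_N -> S} -> R) :
  E (fun f => \sum_i F i f) = \sum_i E (F i).
Proof.
rewrite /E exchange_big; apply: eq_bigr => f _; by rewrite mulr_sumr.
Qed.

Lemma E_le F G : (forall f, F f <= G f) -> E F <= E G.
Proof. move=> h; apply: ler_sum => f _; apply: ler_wpM2l; [exact: wt_ge0|exact: h]. Qed.

Lemma E_norm_le F c : (forall f, `|F f| <= c) -> `|E F| <= c.
Proof.
move=> h; apply: le_trans (ler_norm_sum _ _ _) _.
rewrite -[c]E_const; apply: ler_sum => f _.
rewrite normrM ger0_norm ?wt_ge0 //; apply: ler_wpM2l; [exact: wt_ge0|exact: h].
Qed.

Lemma E_ext F G : (forall f, F f = G f) -> E F = E G.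
Proof. by move=> h; apply: eq_bigr => f _; rewrite h. Qed.

Section Mom.
Variable u : 'I_N -> S -> R.
Hypothesis u_mean : forall i, \sum_s q i s * u i s = 0.
Hypothesis u_bd : forall i s, `|u i s| <= 2.

Definition pl (ls : seq 'I_N) (f : {ffun 'I_N -> S}) := \prod_(i <- ls) u i (f i).

Lemma pl_count ls f : pl ls f = \prod_n u n (f n) ^+ count_mem n ls.
Proof.
elim: ls => [|a ls IH]; rewrite /pl.
  by rewrite big_nil; apply/esym/big1 => n _; rewrite expr0.
rewrite big_cons -/(pl ls f) IH.
under [RHS]eq_bigr do rewrite /= exprD.
rewrite big_split /=; congr (_ * _).
rewrite (bigD1 a) //= eqxx expr1 big1 ?mulr1 // => n /negbTE.
by rewrite eq_sym => ->; rewrite expr0.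
Qed.

Lemma E_pl ls : E (pl ls) = \prod_n \sum_s q n s * u n s ^+ count_mem n ls.
Proof.
rewrite (@E_ext (pl ls) (fun f => \prod_n (fun n s => u n s ^+ count_mem n ls) n (f n))).
  by rewrite (E_prod (fun n s => u n s ^+ count_mem n ls)).
by move=> f; rewrite pl_count.
Qed.

Lemma E_pl_unique ls n : count_mem n ls = 1%N -> E (pl ls) = 0.
Proof.
move=> h; rewrite E_pl (bigD1 n) //= h.
under eq_bigr do rewrite expr1.
by rewrite u_mean mul0r.
Qed.

Lemma pl_norm ls f : `|pl ls f| <= 2 ^+ size ls.
Proof.
elim: ls => [|a ls IH]; rewrite /pl ?big_nil ?normr1 // big_cons normrM /=.
rewrite exprS; apply: ler_pM => //; exact: u_bd.
Qed.

Lemma count_pairs (i j k l : 'I_N) : [|| (i==j)&&(k==l), (i==k)&&(j==l), (i==l)&&(j==k),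
  count_mem i [::i;j;k;l] == 1%N, count_mem j [::i;j;k;l] == 1%N, count_mem k [::i;j;k;l] == 1%N | count_mem l [::i;j;k;l] == 1%N].
Proof.
rewrite /=.
case: (eqVneq i j) => [?|nij]; case: (eqVneq i k) => [?|nik]; case: (eqVneq i l) => [?|nil];
case: (eqVneq j k) => [?|njk]; case: (eqVneq j l) => [?|njl]; case: (eqVneq k l) => [?|nkl]; subst;
rewrite ?eqxx //= ?(negbTE nij, negbTE nik, negbTE nil, negbTE njk, negbTE njl, negbTE nkl) ?(eq_sym j i, eq_sym k i, eq_sym l i, eq_sym k j, eq_sym l j, eq_sym l k) ?eqxx ?(negbTE nij, negbTE nik, negbTE nil, negbTE njk, negbTE njl, negbTE nkl) ?orbT //;
try (match goal with H : is_true (?x != ?x) |- _ => by rewrite eqxx in H end).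
Qed.

Lemma sum_delta (i : 'I_N) (F : 'I_N -> R) : \sum_j (i == j)%:R * F j = F i.
Proof.
rewrite (bigD1 i) //= eqxx mul1r big1 ?addr0 // => j /negbTE.
by rewrite eq_sym => ->; rewrite mul0r.
Qed.

Lemma sum_delta1 (i : 'I_N) : \sum_j (i == j)%:R = 1 :> R.
Proof. by rewrite -[RHS](sum_delta i (fun _ => 1)); apply: eq_bigr => j _; rewrite mulr1. Qed.

Lemma E_u i : E (fun f => u i (f i)) = 0.
Proof.
rewrite (@E_ext _ (pl [:: i])); first by apply: (@E_pl_unique _ i); rewrite /= eqxx.
by move=> f; rewrite /pl big_cons big_nil mulr1.
Qed.

Lemma E_uu i j : E (fun f => u i (f i) * u j (f j)) = (i == j)%:R * \sum_s q i s * u i s ^+ 2.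
Proof.
rewrite (@E_ext _ (pl [:: i; j])); last first.
  by move=> f; rewrite /pl !big_cons big_nil mulr1.
case: (eqVneq i j) => [<-|nij]; last first.
  by rewrite mul0r; apply: (@E_pl_unique _ i); rewrite /= eqxx eq_sym (negbTE nij).
rewrite mul1r E_pl (bigD1 i) //= eqxx /= addn0.
rewrite [X in _ * X]big1 ?mulr1 // => n /negbTE.
rewrite eq_sym => -> /=; under eq_bigr do rewrite expr0 mulr1; exact: q_sum1.
Qed.

Lemma E_u4 i j k l : E (fun f => u i (f i) * u j (f j) * u k (f k) * u l (f l)) <=
  16 * ((i==j)%:R * (k==l)%:R + (i==k)%:R * (j==l)%:R + (i==l)%:R * (j==k)%:R).
Proof.
rewrite (@E_ext _ (pl [:: i; j; k; l])); last first.
  by move=> f; rewrite /pl !big_cons big_nil mulr1 !mulrA.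
have h0 : forall b1 b2 : bool, 0 <= b1%:R * b2%:R :> R by move=> b1 b2; rewrite mulr_ge0.
have Hn : forall ls, size ls = 4%N -> E (pl ls) <= 16.
  move=> ls hs; apply: le_trans (ler_norm _) _; apply: E_norm_le => f.
  by apply: le_trans (pl_norm _ _) _; rewrite hs -natrX.
case/or4P: (count_pairs i j k l) => [/andP[/eqP<- /eqP<-]|/andP[/eqP<- /eqP<-]|/andP[/eqP<- /eqP<-]|].
- apply: le_trans (Hn [:: _; _; _; _] erefl) _; rewrite !eqxx mul1r -[X in X <= _]mulr1 ler_wpM2l //.
  by rewrite -addrA lerDl addr_ge0.
- apply: le_trans (Hn [:: _; _; _; _] erefl) _; rewrite !eqxx mul1r -[X in X <= _]mulr1 ler_wpM2l //.
  by rewrite addrAC lerDr addr_ge0.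
- apply: le_trans (Hn [:: _; _; _; _] erefl) _; rewrite !eqxx mul1r -[X in X <= _]mulr1 ler_wpM2l //.
  by rewrite lerDr addr_ge0.
case/or4P => /eqP h; rewrite (@E_pl_unique _ _ h) mulr_ge0 // !addr_ge0 //.
Qed.

Definition U f := \sum_i u i (f i).

Lemma sum4 (a : 'I_N -> R) : (\sum_i a i) ^+ 4 =
  \sum_i \sum_j \sum_k \sum_l a i * a j * a k * a l.
Proof.
rewrite 3!exprS expr1 mulr_suml; apply: eq_bigr => i _.
rewrite mulr_suml mulr_sumr; apply: eq_bigr => j _.
rewrite mulr_suml !mulr_sumr; apply: eq_bigr => k _.
rewrite !mulr_sumr; apply: eq_bigr => l _.
by rewrite !mulrA.
Qed.

Lemma E_U : E U = 0.
Proof. by rewrite /U E_sum big1 // => i _; apply: E_u. Qed.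

Lemma E_U2 : E (fun f => U f ^+ 2) = \sum_i \sum_s q i s * u i s ^+ 2.
Proof.
rewrite (@E_ext _ (fun f => \sum_i \sum_j u i (f i) * u j (f j))); last first.
  by move=> f; rewrite /U expr2 mulr_suml; apply: eq_bigr => i _; rewrite mulr_sumr.
rewrite E_sum; apply: eq_bigr => i _; rewrite E_sum.
under eq_bigr do rewrite E_uu.
by rewrite (sum_delta i (fun j => \sum_s q i s * u i s ^+ 2)).
Qed.

Lemma E_U4 : E (fun f => U f ^+ 4) <= 48 * N%:R ^+ 2.
Proof.
rewrite (@E_ext _ (fun f => \sum_i \sum_j \sum_k \sum_l
   u i (f i) * u j (f j) * u k (f k) * u l (f l))); last by move=> f; rewrite /U sum4.
rewrite E_sum.
apply: (@le_trans _ _ (\sum_(i : 'I_N) \sum_(j : 'I_N) \sum_(k : 'I_N) \sum_(l : 'I_N)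
  16 * ((i==j)%:R * (k==l)%:R + (i==k)%:R * (j==l)%:R + (i==l)%:R * (j==k)%:R))).
  apply: ler_sum => i _; rewrite E_sum; apply: ler_sum => j _; rewrite E_sum;
  apply: ler_sum => k _; rewrite E_sum; apply: ler_sum => l _; exact: E_u4.
have hkl : forall i j : 'I_N, \sum_(k : 'I_N) \sum_(l : 'I_N)
  16 * ((i==j)%:R * (k==l)%:R + (i==k)%:R * (j==l)%:R + (i==l)%:R * (j==k)%:R)
  = 16 * ((i==j)%:R * N%:R + 2) :> R.
  move=> i j.
  have hl : forall k : 'I_N, \sum_(l : 'I_N) ((i==j)%:R * (k==l)%:R + (i==k)%:R * (j==l)%:R
     + (i==l)%:R * (j==k)%:R) = (i==j)%:R + (i==k)%:R + (j==k)%:R :> R.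
    move=> k; rewrite !big_split /= ; rewrite -!mulr_sumr !sum_delta1 !mulr1.
    by rewrite (sum_delta i (fun _ => (j==k)%:R)).
  transitivity (\sum_(k : 'I_N) 16 * ((i==j)%:R + (i==k)%:R + (j==k)%:R) :> R).
    by apply: eq_bigr => k _; rewrite -mulr_sumr hl.
  rewrite -mulr_sumr !big_split /= sum_delta1 sum_delta1 sumr_const card_ord.
  ring.
under eq_bigr => i _ do under eq_bigr => j _ do rewrite hkl.
under eq_bigr => i _ do rewrite -mulr_sumr big_split /= (sum_delta i (fun _ => N%:R)) sumr_const card_ord.
rewrite sumr_const card_ord.
have -> : (16 * (N%:R + 2 *+ N)) *+ N = 48 * N%:R ^+ 2 :> R by ring.
by [].
Qed.

End Mom.
Section Anti.
Variable g : S -> R.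
Hypothesis g_bd : forall s, `|g s| <= 1.
Variable k : R.
Hypothesis k0 : 0 < k.
Hypothesis k1 : k <= 1.
Hypothesis var_lb : forall i, k <= \sum_s q i s * (g s - \sum_s' q i s' * g s') ^+ 2.
Hypothesis N_gt0 : (0 < N)%N.

Lemma anti c : 384 / (768 / k) ^+ 2 * Num.sqrt N%:R <= E (fun f => `|\sum_i g (f i) - c|).
Proof.
pose m i := \sum_s q i s * g s.
pose u i s := g s - m i.
have um : forall i, \sum_s q i s * u i s = 0.
  move=> i; rewrite /u; under eq_bigr do rewrite mulrBr.
  by rewrite sumrB -mulr_suml q_sum1 mul1r subrr.
have mb : forall i, `|m i| <= 1.
  move=> i; apply: le_trans (ler_norm_sum _ _ _) _; rewrite -(q_sum1 i).
  apply: ler_sum => s _; rewrite normrM ger0_norm ?q_ge0 //.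
  by rewrite -[X in _ <= X]mulr1 ler_wpM2l ?q_ge0.
have ub : forall i s, `|u i s| <= 2.
  move=> i s; apply: le_trans (ler_normB _ _) _.
  by have := g_bd s; have := mb i; lra.
set d := \sum_i m i - c.
have HX : forall f : {ffun 'I_N -> S}, \sum_i g (f i) - c = U u f + d.
  by move=> f; rewrite /U /d /u sumrB; ring.
rewrite (@E_ext _ (fun f => `|U u f + d|)); last by move=> f; rewrite HX.
set EX := E _.
have EU := @E_U u um.
have hA : k * N%:R + d ^+ 2 <= E (fun f => (U u f + d) ^+ 2).
  rewrite (@E_ext _ (fun f => U u f ^+ 2 + ((2 * d) * U u f + d ^+ 2))); last by move=> f; ring.
  rewrite E_add E_add E_scale E_const EU mulr0 add0r lerD2r (@E_U2 u um).
  apply: (@le_trans _ _ (\sum_(i : 'I_N) k)); first by rewrite sumr_const card_ord mulr_natr.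
  apply: ler_sum => i _; exact: var_lb.
have hB : E (fun f => (U u f + d) ^+ 4) <= 384 * N%:R ^+ 2 + 8 * d ^+ 4.
  apply: (@le_trans _ _ (E (fun f => 8 * U u f ^+ 4 + 8 * d ^+ 4))).
    by apply: E_le => f; apply: pow4.
  rewrite E_add E_scale E_const.
  have := @E_U4 u um ub; lra.
set A := E (fun f => (U u f + d) ^+ 2) in hA.
set B := E (fun f => (U u f + d) ^+ 4) in hB.
set sN := N%:R + d ^+ 2.
have N1 : 1 <= N%:R :> R by rewrite ler1n.
have s0 : 0 < sN by rewrite /sN; have := sqr_ge0 d; lra.
set r := Num.sqrt sN.
have r0 : 0 < r by rewrite sqrtr_gt0.
have rs : r ^+ 2 = sN by rewrite sqr_sqrtr // ltW.
set T := 768 / k.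
have Tk : T * k = 768 by rewrite /T mulfVK // gt_eqF.
have T1 : 1 <= T.
  by rewrite /T ler_pdivlMr // mul1r (le_trans k1) // ler1n.
have ht : (T * r) ^+ 2 * A <= (T * r) ^+ 3 * EX + B.
  have -> : (T * r) ^+ 3 * EX + B = E (fun f => (T * r) ^+ 3 * `|U u f + d| + (U u f + d) ^+ 4).
    by rewrite E_add E_scale.
  rewrite /A -E_scale; apply: E_le => f; apply: pt.
  by rewrite mulr_ge0 // ?ltW // (lt_le_trans ltr01 T1).
have hA' : k * sN <= A by have := ler_piMl (sqr_ge0 d) k1; rewrite /sN mulrDr; lra.
have hB' : B <= 384 * sN ^+ 2.
  have e : sN ^+ 2 = N%:R ^+ 2 + 2 * (N%:R * d ^+ 2) + d ^+ 4 by rewrite /sN; ring.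
  have h1 : 0 <= N%:R * d ^+ 2 by rewrite mulr_ge0 ?sqr_ge0.
  have h2 : 0 <= d ^+ 4 by rewrite exprn_even_ge0.
  rewrite e; lra.
have EX0 : 0 <= EX by rewrite /EX /E; apply: sumr_ge0 => f _; rewrite mulr_ge0 ?wt_ge0.
have step1 : 768 * T * sN ^+ 2 <= T ^+ 3 * r * sN * EX + 384 * sN ^+ 2.
  have e1 : T ^+ 2 * sN * (k * sN) <= (T * r) ^+ 2 * A.
    have -> : (T * r) ^+ 2 = T ^+ 2 * sN by rewrite -rs; ring.
    by apply: ler_wpM2l => //; rewrite mulr_ge0 ?sqr_ge0 // ltW.
  have e2 : (T * r) ^+ 3 = T ^+ 3 * r * sN by rewrite exprMn -rs; ring.
  have e3 : T ^+ 2 * sN * (k * sN) = 768 * T * sN ^+ 2.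
    by rewrite -Tk; ring.
  rewrite e2 in ht; lra.
have step2 : 768 * T * sN <= T ^+ 3 * r * EX + 384 * sN.
  rewrite -(ler_pM2r s0); have -> : (768 * T * sN) * sN = 768 * T * sN ^+ 2 by ring.
  by have -> : (T ^+ 3 * r * EX + 384 * sN) * sN = T ^+ 3 * r * sN * EX + 384 * sN ^+ 2 by ring.
have step3 : 384 * r <= T ^+ 2 * EX.
  have h3 : 384 * T * sN <= T ^+ 3 * r * EX by nra.
  have Tr0 : 0 < T * r by rewrite mulr_gt0 //; lra.
  rewrite -(ler_pM2r Tr0).
  have -> : 384 * r * (T * r) = 384 * T * sN by rewrite -rs; ring.
  by have -> : T ^+ 2 * EX * (T * r) = T ^+ 3 * r * EX by ring.
have w0 : 0 < Num.sqrt (N%:R : R) by rewrite sqrtr_gt0; lra.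
have wr : Num.sqrt (N%:R : R) <= r by rewrite ler_sqrt; [rewrite /sN lerDl sqr_ge0|lra].
have T0 : 0 < T ^+ 2 by rewrite exprn_gt0 //; lra.
apply: (@le_trans _ _ (384 / T ^+ 2 * r)).
  by rewrite ler_wpM2l // divr_ge0 // ltW.
by rewrite mulrAC ler_pdivrMr // [EX * _]mulrC.
Qed.

End Anti.
End Ex.

Lemma sum_deltaT (R : realType) (T : finType) (i : T) (F : T -> R) :
  \sum_j (i == j)%:R * F j = F i.
Proof.
rewrite (bigD1 i) //= eqxx mul1r big1 ?addr0 // => j /negbTE.
by rewrite eq_sym => ->; rewrite mul0r.
Qed.

Theorem mainTheorem13 (R : realType) (S : finType)
    (P : S -> bool -> S -> R) (r : S -> bool -> R) (alpha : R)
    (y : S -> bool -> R) (st : S) :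
  is_stochastic P ->
  0 < alpha < 1 ->
  lp_optimal P r alpha y ->
  assumption2 y st ->
  (forall s a s', 0 < P s a s') ->
  exists eta' : R, exists Knoise : R, 0 < eta' /\ 0 < Knoise /\
  exists N0 : nat, forall N : nat, (N0 <= N)%N ->
  forall x : {ffun 'I_N -> S},
    l1dist (emp R x) (mu_star y) <= eta' ->
    olc_defined y alpha st x ->
  forall xi : S -> R,
    Num.sqrt (\sum_(s : S) xi s ^+ 2) = 1 ->
    \sum_(s : S) mu_star y s * xi s = 0 ->
  forall a : {ffun 'I_N -> bool},
    olc_action y alpha x a ->
    Knoise / Num.sqrt N%:R <= cond_exp_abs_noise P y alpha st x a xi.
Proof.
move=> Hst Halpha [[Hy0 Hysum Hbal Hy1] _] _ Hpos.
have [p [p0 p1 Hp]] := @finmin R _ (fun t : S * bool * S => P t.1.1 t.1.2 t.2) (fun t => Hpos t.1.1 t.1.2 t.2).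
set n : R := #|S|%:R.
have n0 : 0 <= n by [].
set k := p / (2 * (n + 1)).
have k0 : 0 < k by rewrite divr_gt0 //; lra.
have k1 : k <= 1 by rewrite /k ler_pdivrMr; lra.
exists 1, (384 / (768 / k) ^+ 2); split; first lra.
split; first by rewrite divr_gt0 // exprn_gt0 // divr_gt0.
exists 1%N => N hN x _ _ xi Hxi Hmu a _.
have mu0 : forall s, 0 <= mu_star y s by move=> s; rewrite addr_ge0.
have mu1 : \sum_s mu_star y s = 1.
  by rewrite -Hy1; apply: eq_bigr => s _; rewrite big_bool /= addrC.
have g1 : \sum_s xi s ^+ 2 = 1.
  rewrite -(@sqr_sqrtr _ (\sum_s xi s ^+ 2)) ?Hxi ?expr1n //.
  by apply: sumr_ge0 => s _; exact: sqr_ge0.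
have gbd : forall s, `|xi s| <= 1.
  move=> s; have h : xi s ^+ 2 <= 1.
    by rewrite -g1 (bigD1 s) //= lerDl; apply: sumr_ge0 => j _; apply: sqr_ge0.
  have := normr_ge0 (xi s); have : `|xi s| ^+ 2 = xi s ^+ 2 by rewrite real_normK ?num_real.
  nra.
pose q i s := P (x i) (a i) s.
have q0 : forall i s, 0 <= q i s by move=> i s; rewrite /q ltW.
have q1 : forall i, \sum_s q i s = 1 by move=> i; exact: (Hst (x i) (a i)).2.
have vlb : forall i, k <= \sum_s q i s * (xi s - \sum_s' q i s' * xi s') ^+ 2.
  move=> i; have h := @varlb R S (mu_star y) xi (\sum_s' q i s' * xi s') mu0 mu1 Hmu g1.
  apply: (@le_trans _ _ (p * \sum_s (xi s - \sum_s' q i s' * xi s') ^+ 2)).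
    have -> : k = p * (1 / (2 * (n + 1))) by rewrite mul1r.
    by apply: ler_wpM2l => //; apply: ltW.
  rewrite mulr_sumr; apply: ler_sum => s _; apply: ler_wpM2r; first exact: sqr_ge0.
  exact: (Hp (x i, a i, s)).
have N0 : (0 < N)%N by [].
have NR : 0 < N%:R :> R by rewrite ltr0n.
set c0 := \sum_(s' : S) (\sum_(s : S) (emp R x s - mu_star y s) * Phi P y alpha st s s') * xi s'.
have cntE : forall (nxt : {ffun 'I_N -> S}) s', (cnt nxt s')%:R = \sum_i (nxt i == s')%:R :> R.
  move=> nxt s'; rewrite /cnt -sum1dep_card natr_sum big_mkcond /=.
  by apply: eq_bigr => i _; case: (nxt i == s').
have noiseE : forall nxt, noise_term P y alpha st x nxt xi = N%:R^-1 * (\sum_i xi (nxt i) - N%:R * c0).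
  move=> nxt; rewrite /noise_term -/c0.
  have -> : \sum_s' (emp R nxt s' - mu_star y s') * xi s' = N%:R^-1 * \sum_i xi (nxt i).
    under eq_bigr do rewrite mulrBl.
    rewrite sumrB Hmu subr0 /emp.
    under eq_bigr do rewrite cntE mulrAC mulr_suml.
    rewrite -mulr_suml exchange_big /= mulrC; congr (_ * _).
    by apply: eq_bigr => i _; rewrite sum_deltaT.
  by rewrite mulrBr mulrA mulVf ?mul1r // lt0r_neq0.
have -> : cond_exp_abs_noise P y alpha st x a xi =
    N%:R^-1 * E R S N q (fun f => `|\sum_i xi (f i) - N%:R * c0|).
  rewrite -E_scale /cond_exp_abs_noise /E; apply: eq_bigr => f _.
  by rewrite noiseE normrM ger0_norm // invr_ge0 ltW.
have := @anti R S N q q0 q1 xi gbd k k0 k1 vlb N0 (N%:R * c0).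
set Ev := E _ _ _ _ _.
set K := 384 / _.
move=> h.
have w0 : 0 < Num.sqrt (N%:R : R) by rewrite sqrtr_gt0.
have ww : Num.sqrt (N%:R : R) ^+ 2 = N%:R by rewrite sqr_sqrtr // ltW.
set w := Num.sqrt (N%:R : R) in w0 ww h *.
have -> : K / w = N%:R^-1 * (K * w).
  by rewrite -ww; field; exact: lt0r_neq0 w0.
by rewrite ler_wpM2l // invr_ge0 ltW.
Qed.
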